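(* Let $k\ge 0$ be an integer, let $G=(V,E)$ be a finite graph together with a finite family $\mathcal{C}$ of v-cliques such that $E$ consists exactly of the pairs of distinct nodes lying in a common member of $\mathcal{C}$. Let $G'$ be the graph obtained from $G$ by merging, for each $C\in\mathcal{C}$, all nodes that belong to $C$ and to no other member of $\mathcal{C}$ into a single node, and let $\pi:V\to V(G')$ be the merging map. Then for any two distinct nodes $u,v\in V$: $u$ and $v$ belong to the same $k$-core of $G$ if and only if they belong to the same $k$-core of $G'$.
   Context: A v-clique is a set of nodes inducing a complete subgraph. The merged graph $G'$ has node set $\pi(V)$, where $\pi$ identifies exactly those nodes whose set of containing v-cliques is a single common set $\{C\}$; two distinct nodes $x,y$ of $G'$ are adjacent iff some $u\in\pi^{-1}(x)$, $w\in\pi^{-1}(y)$ are adjacent in $G$. Each node $x$ of $G'$ is said to represent the $|\pi^{-1}(x)|$ nodes of $G$ mapped to it. A finite simple undirected graph $H$ is $k$-robust if, after removing arbitrary $k$ nodes and their incident edges, the remaining graph is still connected; a clique or a single node is $k$-robust for every $k$. A maximal $k$-robust partitioning of a graph $H$ is a partition of its node set into parts such that each node is in exactly one part, each part induces a $k$-robust subgraph, and the union of any two or more parts does not induce a $k$-robust subgraph. For a graph $H$, let $u\approx_H v$ mean that $u$ and $v$ lie in the same part in every maximal $k$-robust partitioning of $H$. In $G$, a $k$-core is an equivalence class of $\approx_G$ with at least $2$ nodes, and $u,v$ belong to the same $k$-core of $G$ iff they lie in a common such class. In $G'$, nodes are counted by the records they represent: a $k$-core of $G'$ is an equivalence class $X$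 of $\approx_{G'}$ with $|\pi^{-1}(X)|\ge 2$, and $u,v\in V$ belong to the same $k$-core of $G'$ iff $\pi(u),\pi(v)$ lie in a common such class (in particular this holds when $\pi(u)=\pi(v)$). *)

(* Defs.v *)
From mathcomp Require Import all_boot.
Set Implicit Arguments. Unset Strict Implicit. Unset Printing Implicit Defensive.

(* Graphs: a finType T with an adjacency relation e; a graph H is given by a
   node set D : {set T}, with the subgraph induced by e. *)
Section GraphNotions.
Variables (T : finType) (e : rel T).

(* the subgraph induced on S is connected (the empty graph counts as connected) *)
Definition gconnected (S : {set T}) : Prop :=
  forall x y, x \in S -> y \in S ->
    connect [rel a b | [&& a \in S, b \in S & e a b]] x y.

Definition is_clique (S : {set T}) : Prop :=
  forall x y, x \in S -> y \in S -> x != y -> e x y.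

Definition k_robust (k : nat) (S : {set T}) : Prop :=
  is_clique S \/ (forall R : {set T}, #|R| <= k -> gconnected (S :\: R)).

Definition max_robust_partition (k : nat) (D : {set T}) (P : {set {set T}}) : Prop :=
  [/\ partition P D,
      (forall B, B \in P -> k_robust k B) &
      (forall Q : {set {set T}}, Q \subset P -> 2 <= #|Q| -> ~ k_robust k (cover Q))].

Definition robust_equiv (k : nat) (D : {set T}) (x y : T) : Prop :=
  forall P, max_robust_partition k D P -> exists2 B, B \in P & x \in B /\ y \in B.

Definition robust_class (k : nat) (D : {set T}) (X : {set T}) : Prop :=
  exists2 x, x \in D & forall y, y \in X <-> (y \in D /\ robust_equiv k D x y).

End GraphNotions.

Definition same_kcore_G (V : finType) (e : rel V) (k : nat) (u v : V) : Prop :=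
  exists X : {set V}, [/\ robust_class e k setT X, 2 <= #|X|, u \in X & v \in X].

Section Merge.
Variables (V : finType) (F : {set {set V}}).

Definition containing (u : V) : {set {set V}} := [set C in F | u \in C].

(* merging map: u is identified with w iff u = w or both are contained in
   exactly the same single member {C} of the family. A node of G' is
   represented by the set of nodes of G mapped to it. *)
Definition merge_map (u : V) : {set V} :=
  [set w | (w == u) || ((containing w == containing u) && (#|containing u| == 1))].

Definition merged_nodes : {set {set V}} := [set merge_map u | u in V].

Definition merged_edge (e : rel V) : rel {set V} :=
  fun x y => (x != y) &&
    [exists u, exists w, [&& merge_map u == x, merge_map w == y & e u w]].

Definition same_kcore_G' (e : rel V) (k : nat) (u v : V) : Prop :=
  exists X : {set {set V}},
    [/\ robust_class (merged_edge e) k merged_nodes X,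
        2 <= #|[set w : V | merge_map w \in X]|,
        merge_map u \in X & merge_map v \in X].

End Merge.

(* Main.v *)
Require Import Defs.
From mathcomp Require Import all_boot.
From Stdlib Require Import ClassicalEpsilon.
Set Implicit Arguments. Unset Strict Implicit. Unset Printing Implicit Defensive.

Lemma connect_hom (T T' : finType) (r : rel T) (r' : rel T') (h : T -> T') :
  (forall x y, r x y -> connect r' (h x) (h y)) ->
  forall x y, connect r x y -> connect r' (h x) (h y).
Proof.
move=> H x y /connectP [p pth ->]; elim: p x pth => [|z p IH] x /=; first by rewrite connect0.
by case/andP=> rxz pth; apply: connect_trans (H _ _ rxz) (IH _ pth).
Qed.

Definition rs (T : finType) (e : rel T) (S : {set T}) : rel T :=
  [rel a b | [&& a \in S, b \in S & e a b]].

Lemma connect_mono (T : finType) (e : rel T) (S S' : {set T}) x y :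
  S \subset S' -> connect (rs e S) x y -> connect (rs e S') x y.
Proof.
move=> sS; apply: (connect_hom (h := id)) => a b /and3P [aS bS eab].
by apply: connect1; rewrite /rs /= (subsetP sS _ aS) (subsetP sS _ bS).
Qed.

Definition simplicial (T : finType) (e : rel T) z :=
  forall a b, e z a -> e z b -> a != b -> e a b.

Lemma remove_simplicial1 (T : finType) (e : rel T) (W : {set T}) z x y :
  symmetric e -> irreflexive e -> (z \in W -> simplicial e z) ->
  x != z -> y != z -> connect (rs e W) x y -> connect (rs e (W :\ z)) x y.
Proof.
move=> esym eirr zs xz yz /connectP [p pth ly]; subst y.
elim: {p}(size p) {-2}p (leqnn (size p)) x xz pth yz => [|n IH] [|a p] //= sz x xz;
  try by rewrite connect0.
case/andP=> /and3P[xW aW exa] pth lz.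
have [az|az] := eqVneq a z.
  subst a; case: p pth lz sz => [|b p] /=; first by rewrite eqxx.
  case/andP=> /and3P[_ bW ezb] pth lz sz.
  have bz : b != z by apply: contraTneq ezb => ->; rewrite eirr.
  have [bx|bx] := eqVneq b x.
    subst b; apply: IH => //; exact: leq_trans (leqnSn _) sz.
  apply: connect_trans (IH p _ b bz pth lz); last exact: leq_trans (leqnSn _) sz.
  apply: connect1; rewrite /rs /= !inE xz bz xW bW /=.
  apply: (zs aW) => //; first by rewrite esym.
  by rewrite eq_sym.
apply: connect_trans (IH p sz a az pth lz).
by apply: connect1; rewrite /rs /= !inE xz az xW aW.
Qed.

Lemma remove_simplicial (T : finType) (e : rel T) : symmetric e -> irreflexive e ->
  forall (Z W : {set T}) x y, (forall z, z \in Z -> z \in W -> simplicial e z) -> x \notin Z -> y \notin Z ->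
  connect (rs e W) x y -> connect (rs e (W :\: Z)) x y.
Proof.
move=> esym eirr Z; have [n] := ubnP #|Z|; elim: n Z => [//|n IH] Z.
move=> szn W x y zs xZ yZ c.
case: (set_0Vmem Z) => [Z0|[z zZ]]; first by rewrite Z0 setD0.
have szZ : #|Z :\ z| < n by move: szn; rewrite (cardsD1 z Z) zZ.
have c1 := IH (Z :\ z) szZ W x y.
have c2 : connect (rs e (W :\: (Z :\ z))) x y.
  apply: c1 => //.
  - by move=> z' /setD1P[_ ?]; apply: zs.
  - by rewrite inE negb_and xZ orbT.
  - by rewrite inE negb_and yZ orbT.
have -> : W :\: Z = (W :\: (Z :\ z)) :\ z.
  apply/setP=> t; rewrite !inE; case: (t =P z) => [->|_]; first by rewrite zZ.
  by rewrite andbC.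
apply: remove_simplicial1 => //.
- by move=> /setDP[zW _]; apply: zs.
- by apply: contraNneq xZ => ->.
- by apply: contraNneq yZ => ->.
Qed.
Notation mm := Defs.merge_map.

Lemma fib_refl (V : finType) (F : {set {set V}}) (u : V) : u \in mm F u.
Proof. by rewrite inE eqxx. Qed.

Lemma fib_eq (V : finType) (F : {set {set V}}) (u w : V) :
  w \in mm F u -> mm F w = mm F u.
Proof.
rewrite inE => /orP [/eqP->//| /andP[/eqP cwu c1]].
apply/setP=> z; rewrite !inE cwu c1 !andbT.
case: (z =P w) => [->|_]; first by rewrite cwu eqxx !orbT.
case: (z =P u) => [->|_] //=; by rewrite ?eqxx ?orbT.
Qed.

Lemma fib_same (V : finType) (F : {set {set V}}) (u w : V) :
  w \in mm F u -> u != w -> containing F w = containing F u /\ #|containing F u| == 1.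
Proof.
rewrite inE => /orP [/eqP->|/andP[/eqP cwu c1]]; first by rewrite eqxx.
by [].
Qed.

Definition ehyp (V : finType) (e : rel V) (F : {set {set V}}) :=
  forall x y, e x y = (x != y) && [exists C in F, (x \in C) && (y \in C)].

Lemma esymm (V : finType) (e : rel V) F : ehyp e F -> symmetric e.
Proof.
move=> He x y; rewrite !He eq_sym.
case: (y != x) => //=; apply: eq_existsb => C; by rewrite [(x \in C) && _]andbC.
Qed.

Lemma eirr (V : finType) (e : rel V) F : ehyp e F -> irreflexive e.
Proof. by move=> He x; rewrite He eqxx. Qed.

Lemma incont (V : finType) (F : {set {set V}}) (u : V) C :
  (C \in containing F u) = (C \in F) && (u \in C).
Proof. by rewrite /containing inE. Qed.

Lemma fib_edge (V : finType) (e : rel V) F (u w : V) : ehyp e F ->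
  w \in mm F u -> w != u -> e u w.
Proof.
move=> He wf wu; have uw : u != w by rewrite eq_sym.
have [cwu /cards1P[C cC]] := fib_same wf uw.
rewrite He eq_sym wu /=; apply/existsP; exists C.
have : C \in containing F u by rewrite cC set11.
have : C \in containing F w by rewrite cwu cC set11.
by rewrite !incont => /andP[-> ->] /andP[_ ->].
Qed.

Lemma fib_twin (V : finType) (e : rel V) F (u w z : V) : ehyp e F ->
  w \in mm F u -> z \notin mm F u -> e u z = e w z.
Proof.
move=> He wf zf.
have [wu|wu] := eqVneq w u; first by rewrite wu.
have uw : u != w by rewrite eq_sym.
have [cwu _] := fib_same wf uw.
have zu : u != z by apply: contraNneq zf => <-; exact: fib_refl.
have zw : w != z by apply: contraNneq zf => <-.
rewrite !He zu zw /=; apply: eq_existsb => C.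
have := congr1 (fun s : {set {set V}} => C \in s) cwu; rewrite !incont.
by rewrite !andbA => ->.
Qed.

Lemma fib_simpl (V : finType) (e : rel V) F (u w : V) : ehyp e F ->
  w \in mm F u -> w != u -> simplicial e u.
Proof.
move=> He wf wu; have uw : u != w by rewrite eq_sym.
have [_ /cards1P[C cC]] := fib_same wf uw.
have inC : forall a, e u a -> a \in C.
  move=> a; rewrite He => /andP[_ /existsP[C' /andP[C'F /andP[uC aC]]]].
  have : C' \in containing F u by rewrite incont C'F uC.
  by rewrite cC inE => /eqP <-.
have CF : C \in F by have := set11 C; rewrite -cC incont => /andP[].
move=> a b ua ub ab; rewrite He ab /=; apply/existsP; exists C.
by rewrite CF (inC _ ua) (inC _ ub).
Qed.

Definition cnb (V : finType) (e : rel V) (u : V) := [set z | (z == u) || e u z].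

Lemma fib_cnb (V : finType) (e : rel V) F (u t : V) : ehyp e F ->
  t \in mm F u -> t \in cnb e u /\ (forall z, e t z -> z \in cnb e u).
Proof.
move=> He tf; split.
  have [tu|tu] := eqVneq t u; first by rewrite inE tu eqxx.
  by rewrite inE (fib_edge He tf tu) orbT.
move=> z etz; case zf: (z \in mm F u).
  have [zu|zu] := eqVneq z u; first by rewrite inE zu eqxx.
  by rewrite inE (fib_edge He zf zu) orbT.
by rewrite inE (fib_twin He tf (negbT zf)) etz orbT.
Qed.

Lemma cnb_clique (V : finType) (e : rel V) F (u w : V) : ehyp e F ->
  w \in mm F u -> w != u -> is_clique e (cnb e u).
Proof.
move=> He wf wu x y; rewrite /cnb !inE => xK yK xy.
have sm := fib_simpl He wf wu.
have [xu|xu] := eqVneq x u.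
  subst x; case/orP: yK => [/eqP yu|//]; by rewrite yu eqxx in xy.
have [yu|yu] := eqVneq y u.
  subst y; rewrite (esymm He); by case/orP: xK => [/eqP xu'|//]; rewrite xu' eqxx in xu.
rewrite (negbTE xu) in xK; rewrite (negbTE yu) in yK; exact: sm.
Qed.

Lemma edge'_lift (V : finType) (e : rel V) F (a b : V) : ehyp e F ->
  merged_edge F e (mm F a) (mm F b) -> e a b.
Proof.
move=> He /andP[neq /existsP[a' /existsP[b' /and3P[/eqP fa' /eqP fb' eab']]]].
have aa' : a \in mm F a' by rewrite fa' fib_refl.
have bb' : b \in mm F b' by rewrite fb' fib_refl.
have b'a' : b' \notin mm F a'.
  by apply: contra neq => /fib_eq H; rewrite -fa' -fb' H.
rewrite (fib_twin He aa' b'a') in eab'.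
have ab' : a \notin mm F b'.
  by apply: contra neq => /fib_eq H; rewrite H fb'.
by rewrite (esymm He a b) -(fib_twin He bb' ab') (esymm He b' a).
Qed.

Lemma edge'_intro (V : finType) (e : rel V) F (a b : V) :
  mm F a != mm F b -> e a b -> merged_edge F e (mm F a) (mm F b).
Proof.
move=> ne eab; rewrite /merged_edge ne; apply/existsP; exists a; apply/existsP; exists b.
by rewrite !eqxx eab.
Qed.

Lemma e'_form (V : finType) (e : rel V) F x y :
  merged_edge F e x y -> exists a b, x = mm F a /\ y = mm F b.
Proof.
by case/andP=> _ /existsP[a /existsP[b /and3P[/eqP <- /eqP <- _]]]; exists a, b.
Qed.

Lemma e'sym (V : finType) (e : rel V) F : ehyp e F -> symmetric (merged_edge F e).
Proof.
move=> He.
suff H : forall x y, merged_edge F e x y -> merged_edge F e y x.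
  by move=> x y; apply/idP/idP; apply: H.
move=> x y /andP[ne /existsP[a /existsP[b /and3P[fa fb eab]]]].
rewrite /merged_edge eq_sym ne; apply/existsP; exists b; apply/existsP; exists a.
by rewrite fa fb (esymm He) eab.
Qed.

Lemma e'irr (V : finType) (e : rel V) F : irreflexive (merged_edge F e).
Proof. by move=> x; rewrite /merged_edge eqxx. Qed.

Lemma e'_simpl (V : finType) (e : rel V) F (u w : V) : ehyp e F ->
  w \in mm F u -> w != u -> simplicial (merged_edge F e) (mm F u).
Proof.
move=> He wf wu y1 y2 h1 h2 ne.
have [_ [b1 [_ ?]]] := e'_form h1; subst y1.
have [_ [b2 [_ ?]]] := e'_form h2; subst y2.
apply: edge'_intro => //.
have ub1 := edge'_lift He h1; have ub2 := edge'_lift He h2.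
apply: (fib_simpl He wf wu) => //.
by apply: contraNneq ne => ->.
Qed.

Lemma inN (V : finType) (F : {set {set V}}) x :
  x \in merged_nodes F -> exists a, x = mm F a.
Proof. by case/imsetP=> a _ ->; exists a. Qed.

Lemma mmN (V : finType) (F : {set {set V}}) a : mm F a \in merged_nodes F.
Proof. by apply/imsetP; exists a. Qed.

Lemma clique_transfer (V : finType) (e : rel V) F (B : {set {set V}}) : ehyp e F ->
  B \subset merged_nodes F ->
  is_clique e (mm F @^-1: B) <-> is_clique (merged_edge F e) B.
Proof.
move=> He BN; split.
  move=> cl x y xB yB xy.
  have [a xa] := inN (subsetP BN _ xB); have [b yb] := inN (subsetP BN _ yB); subst x y.
  apply: edge'_intro => //; apply: cl; rewrite ?inE //.
  by apply: contraNneq xy => ->.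
move=> cl a b; rewrite !inE => aB bB ab.
have [fab|fab] := eqVneq (mm F a) (mm F b).
  have bfa : b \in mm F a by rewrite fab fib_refl.
  by apply: (fib_edge He bfa); rewrite eq_sym.
exact: (edge'_lift He (cl _ _ aB bB fab)).
Qed.

Lemma rem_down (V : finType) (e : rel V) F (B : {set {set V}}) k : ehyp e F ->
  B \subset merged_nodes F ->
  (forall R : {set V}, #|R| <= k -> gconnected e ((mm F @^-1: B) :\: R)) ->
  (forall R' : {set {set V}}, #|R'| <= k -> gconnected (merged_edge F e) (B :\: R')).
Proof.
move=> He BN H R' R'k x y /setDP[xB xR] /setDP[yB yR].
set S := mm F @^-1: B.
set R := [set u | (mm F u \in R') && (#|mm F u| == 1)].
have Rk : #|R| <= k.
  have inj : {in R &, injective (mm F)}.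
    move=> a b; rewrite !inE => /andP[_ /cards1P[c hc]] _ fab.
    have : b \in mm F a by rewrite fab fib_refl.
    have : a \in mm F a by exact: fib_refl.
    by rewrite hc !inE => /eqP -> /eqP ->.
  rewrite -(card_in_imset inj); apply: leq_trans R'k; apply: subset_leq_card.
  by apply/subsetP => z /imsetP[a]; rewrite inE => /andP[? _] ->.
have [a xa] := inN (subsetP BN _ xB); have [b yb] := inN (subsetP BN _ yB); subst x y.
set Zs := [set x in R' | #|x| == 1].
set Zb := [set x in R' | #|x| != 1].
have down : forall p, p \in S :\: R -> mm F p \in B :\: Zs.
  by move=> p; rewrite !inE.
have aS : a \in S :\: R by rewrite !inE (negbTE xR) xB.
have bS : b \in S :\: R by rewrite !inE (negbTE yR) yB.
have c : connect (rs e (S :\: R)) a b := H R Rk a b aS bS.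
have c2 : connect (rs (merged_edge F e) (B :\: Zs)) (mm F a) (mm F b).
  apply: (connect_hom (h := mm F)) c => p q /and3P[pS qS epq].
  have [fpq|fpq] := eqVneq (mm F p) (mm F q); first by rewrite fpq connect0.
  by apply: connect1; rewrite /rs /= edge'_intro // andbT !down.
have -> : B :\: R' = (B :\: Zs) :\: Zb.
  apply/setP => t; rewrite !inE; by case: (t \in R'); case: (#|t| == 1).
change (connect (rs (merged_edge F e) ((B :\: Zs) :\: Zb)) (mm F a) (mm F b)).
apply: remove_simplicial (e'sym He) (@e'irr _ e F) _ _ _ _ _ _ _ c2.
- move=> z; rewrite !inE => /andP[_ zn1] /andP[_ zB].
  have [c0 zc] := inN (subsetP BN _ zB); subst z.
  case: (pickP [pred w | (w \in mm F c0) && (w != c0)]) => [w /andP[wc wnc]|none].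
    exact: e'_simpl He wc wnc.
  have : mm F c0 = [set c0].
    apply/setP => w; rewrite inE; have := none w; rewrite /=.
    case: (w =P c0) => [->|_]; first by rewrite fib_refl.
    by rewrite andbT => ->.
  by move=> h; rewrite h cards1 in zn1.
- by rewrite inE negb_and xR.
- by rewrite inE negb_and yR.
Qed.

Lemma rem_up (V : finType) (e : rel V) F (B : {set {set V}}) k : ehyp e F ->
  B \subset merged_nodes F ->
  (forall R' : {set {set V}}, #|R'| <= k -> gconnected (merged_edge F e) (B :\: R')) ->
  (forall R : {set V}, #|R| <= k -> gconnected e ((mm F @^-1: B) :\: R)).
Proof.
move=> He BN H R Rk a b aS bS.
set S := mm F @^-1: B in aS bS *.
set R' := [set x in mm F @: R | x \subset R].
have R'k : #|R'| <= k.
  apply: leq_trans (leq_trans (leq_imset_card (mm F) R) Rk).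
  by apply: subset_leq_card; apply/subsetP => x; rewrite inE => /andP[].
have key : forall c, c \in S :\: R -> mm F c \in B :\: R'.
  move=> c; rewrite !inE => /andP[cR ->]; rewrite andbT negb_and.
  apply/orP; right; apply/negP => /subsetP /(_ c (fib_refl _ _)).
  by rewrite (negbTE cR).
have c' : connect (rs (merged_edge F e) (B :\: R')) (mm F a) (mm F b)
  := H R' R'k _ _ (key a aS) (key b bS).
move: c' => /connectP[p pth lst].
change (connect (rs e (S :\: R)) a b).
elim: p a aS pth lst => [|y p IH] a aS /=.
  move=> _ fab.
  have [ab|ab] := eqVneq a b; first by rewrite ab connect0.
  apply: connect1; rewrite /rs /= aS bS /=.
  apply: (fib_edge He); last by rewrite eq_sym.
  by rewrite -fab fib_refl.
case/andP => /and3P[_ yBR e'ay] pth lst.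
move: (yBR); rewrite inE => /andP[yR' yB].
have [c0 yc] := inN (subsetP BN _ yB); subst y.
have nsub : ~~ (mm F c0 \subset R).
  apply: contra yR' => sub; rewrite inE sub andbT.
  by apply/imsetP; exists c0 => //; apply: (subsetP sub); apply: fib_refl.
case/subsetPn: nsub => c1 c1c c1R.
have fc1 := fib_eq c1c.
have c1S : c1 \in S :\: R by rewrite !inE c1R /= fc1.
rewrite -fc1 in e'ay pth lst.
apply: connect_trans (IH c1 c1S pth lst).
apply: connect1; rewrite /rs /= aS c1S /=.
exact: edge'_lift He e'ay.
Qed.

Lemma robust_transfer (V : finType) (e : rel V) F (B : {set {set V}}) k : ehyp e F ->
  B \subset merged_nodes F ->
  k_robust e k (mm F @^-1: B) <-> k_robust (merged_edge F e) k B.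
Proof.
move=> He BN; split; case=> [cl|rm].
- by left; apply/(clique_transfer He BN).
- by right; apply: rem_down.
- by left; apply/(clique_transfer He BN).
- by right; apply: rem_up.
Qed.

Lemma rs_sym (T : finType) (e : rel T) (S : {set T}) : symmetric e -> symmetric (rs e S).
Proof. by move=> es p q; rewrite /rs /= es andbCA. Qed.

Lemma part_reach (V : finType) (e : rel V) F k (u w t : V) (A R : {set V}) : ehyp e F ->
  w \in mm F u -> w != u -> t \in mm F u -> t \in A -> k_robust e k A -> #|R| <= k ->
  forall x, x \in A :\: R ->
  exists2 y, y \in (A :\: R) :&: cnb e u & connect (rs e (A :\: R)) x y.
Proof.
move=> He wu wnu tu tA rob Rk.
have [tK tN] := fib_cnb He tu.
case: (boolP (A \subset cnb e u)) => [sub|nsub].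
  move=> x xAR; exists x; last exact: connect0.
  apply/setIP; split => //; apply: (subsetP sub); by case/setDP: xAR.
case/subsetPn: nsub => z zA zK.
have tz : t != z by apply: contraNneq zK => <-.
have rm : forall R : {set V}, #|R| <= k -> gconnected e (A :\: R).
  case: rob => [cl|//]; exfalso.
  by move/negP: zK; apply; apply: tN; apply: cl.
have big : k < #|A :&: [set y | e t y]|.
  rewrite ltnNge; apply/negP => small.
  have tA' : t \in A :\: (A :&: [set y | e t y]) by rewrite !inE tA (eirr He).
  have zA' : z \in A :\: (A :&: [set y | e t y]).
    rewrite !inE zA andbT /=.
    by apply: contra zK; apply: tN.
  have := rm _ small t z tA' zA'.
  move/connectP=> [[|y p] /= pth lst]; first by rewrite lst eqxx in tz.
  case/andP: pth => /and3P[_ yA' ety] _.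
  by move: yA'; rewrite !inE ety /= andbT => /andP[/negP].
move=> x xAR.
have : ~~ (A :&: [set y | e t y] \subset R).
  apply/negP => sub; move: big; rewrite ltnNge.
  by rewrite (leq_trans (subset_leq_card sub) Rk).
case/subsetPn => y /setIP[yA]; rewrite inE => ety yR.
have yAR : y \in A :\: R by rewrite inE yR yA.
exists y; first by apply/setIP; split => //; apply: tN.
exact: rm R Rk x y xAR yAR.
Qed.

Lemma cover2 (T : finType) (A B : {set T}) : cover [set A; B] = A :|: B.
Proof.
apply/setP => x; apply/bigcupP/setUP.
  by case=> X; rewrite !inE => /orP[/eqP->|/eqP->]; [left|right].
by case=> h; [exists A | exists B]; rewrite ?inE ?eqxx ?orbT.
Qed.

Lemma part_sat (V : finType) (e : rel V) F k (P : {set {set V}}) A (a w : V) : ehyp e F ->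
  max_robust_partition e k setT P -> A \in P -> a \in A -> w \in mm F a -> w \in A.
Proof.
move=> He [/and3P[/eqP cov triv nz] rob mx] AP aA wa.
apply/negPn/negP => wA.
have wna : w != a by apply: contraNneq wA => ->.
have : w \in cover P by rewrite cov inE.
case/bigcupP => B BP wB.
have AB : A != B by apply: contraNneq wA => ->.
apply: (mx [set A; B]).
- by apply/subsetP => X; rewrite !inE => /orP[/eqP->|/eqP->].
- by rewrite cards2 AB.
rewrite cover2; right => R Rk.
have cl := cnb_clique He wa wna.
have reach : forall x, x \in (A :|: B) :\: R ->
    exists2 y, y \in cnb e a & connect (rs e ((A :|: B) :\: R)) x y.
  move=> x /setDP[/setUP[xA|xB] xR].
    have xAR : x \in A :\: R by rewrite inE xR xA.
    have [y /setIP[_ yK] c] := part_reach He wa wna (fib_refl F a) aA (rob A AP) Rk xAR.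
    exists y => //; apply: connect_mono c; apply: setSD; exact: subsetUl.
  have xBR : x \in B :\: R by rewrite inE xR xB.
  have [y /setIP[_ yK] c] := part_reach He wa wna wa wB (rob B BP) Rk xBR.
  exists y => //; apply: connect_mono c; apply: setSD; exact: subsetUr.
move=> x y xS yS.
change (connect (rs e ((A :|: B) :\: R)) x y).
have reach2 : forall x, x \in (A :|: B) :\: R ->
    exists2 y, y \in ((A :|: B) :\: R) :&: cnb e a & connect (rs e ((A :|: B) :\: R)) x y.
  move=> x0 /setDP[/setUP[xA|xB] xR].
    have xAR : x0 \in A :\: R by rewrite inE xR xA.
    have [y0 /setIP[yAR yK] c] := part_reach He wa wna (fib_refl F a) aA (rob A AP) Rk xAR.
    exists y0; last by apply: connect_mono c; apply: setSD; exact: subsetUl.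
    apply/setIP; split => //; move: yAR; rewrite !inE => /andP[-> ->]; by [].
  have xBR : x0 \in B :\: R by rewrite inE xR xB.
  have [y0 /setIP[yBR yK] c] := part_reach He wa wna wa wB (rob B BP) Rk xBR.
  exists y0; last by apply: connect_mono c; apply: setSD; exact: subsetUr.
  apply/setIP; split => //; move: yBR; rewrite !inE => /andP[-> ->]; by rewrite orbT.
have [x' /setIP[x'S x'K] cx] := reach2 x xS.
have [y' /setIP[y'S y'K] cy] := reach2 y yS.
have csym : connect_sym (rs e ((A :|: B) :\: R)) by apply: sym_connect_sym; apply: rs_sym; apply: esymm He.
rewrite csym in cy.
apply: connect_trans cx (connect_trans _ cy).
have [xy|xy] := eqVneq x' y'; first by rewrite xy connect0.
by apply: connect1; rewrite /rs /= x'S y'S (cl _ _ x'K y'K xy).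
Qed.

Lemma disjointP (T : finType) (A B : {set T}) :
  reflect (forall x, x \in A -> x \in B -> False) [disjoint A & B].
Proof.
rewrite disjoint_subset; apply: (iffP subsetP) => H x.
  by move=> xA xB; have := H x xA; rewrite inE xB.
by move=> xA; rewrite inE; apply/negP => xB; exact: H x xA xB.
Qed.

Definition satd (V : finType) (F : {set {set V}}) (A : {set V}) :=
  forall a w, a \in A -> w \in mm F a -> w \in A.

Lemma img_mem (V : finType) (F : {set {set V}}) (A : {set V}) x :
  satd F A -> mm F x \in mm F @: A -> x \in A.
Proof. by move=> s /imsetP[a aA eq]; apply: (s a x aA); rewrite -eq fib_refl. Qed.

Lemma preim_img (V : finType) (F : {set {set V}}) (A : {set V}) :
  satd F A -> mm F @^-1: (mm F @: A) = A.
Proof.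
move=> s; apply/setP => x; rewrite inE; apply/idP/idP => [/img_mem|xA]; first exact.
exact: imset_f.
Qed.

Lemma img_N (V : finType) (F : {set {set V}}) (A : {set V}) :
  mm F @: A \subset merged_nodes F.
Proof. by apply/subsetP => x /imsetP[a _ ->]; exact: mmN. Qed.

Lemma equiv_down (V : finType) (e : rel V) F k (u v : V) : ehyp e F ->
  robust_equiv (merged_edge F e) k (merged_nodes F) (mm F u) (mm F v) ->
  robust_equiv e k setT u v.
Proof.
move=> He H P mP.
have sat : forall A, A \in P -> satd F A.
  by move=> A AP a w aA wa; apply: (part_sat He mP AP aA wa).
move: (mP) => [/and3P[/eqP cov triv nz] rob mx].
set P' := [set mm F @: A | A : {set V} in P].
have covP' : cover P' = merged_nodes F.
  apply/setP => x; apply/bigcupP/idP.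
    by case=> B /imsetP[A _ ->] /imsetP[a _ ->]; exact: mmN.
  move=> xN; have [a ->] := inN xN.
  have : a \in cover P by rewrite cov inE.
  case/bigcupP => A AP aA; exists (mm F @: A); [exact: imset_f | exact: imset_f].
have mP' : max_robust_partition (merged_edge F e) k (merged_nodes F) P'.
  split.
  - apply/and3P; split; first by rewrite covP'.
    + apply/trivIsetP => B1 B2 /imsetP[A1 A1P ->] /imsetP[A2 A2P ->] ne.
      have neA : A1 != A2 by apply: contraNneq ne => ->.
      have d := trivIsetP triv A1 A2 A1P A2P neA.
      apply/disjointP => x /imsetP[a1 a1A ->] /imsetP[a2 a2A eq].
      have : a2 \in A1 by apply: (sat A1 A1P a1 a2 a1A); rewrite eq fib_refl.
      by move/disjointP: d => /[apply] /(_ a2A).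
    + apply/imsetP => [[A AP eq]].
      have : A == set0 by rewrite -(imset_eq0 (mm F)) -eq.
      by move/eqP => A0; rewrite -A0 AP in nz.
  - move=> B /imsetP[A AP ->].
    apply: (proj1 (robust_transfer k He (img_N F A))); rewrite preim_img; [exact: rob | exact: sat].
  - move=> R' sub c2 rob'.
    set R := [set A in P | mm F @: A \in R'].
    apply: (mx R).
    + by apply/subsetP=> A; rewrite inE => /andP[].
    + apply: (leq_trans c2); have hh := leq_imset_card (fun A : {set V} => mm F @: A) R; apply: (fun h => leq_trans h hh).
      apply: subset_leq_card; apply/subsetP => B BR'.
      case/imsetP: (subsetP sub _ BR') => A AP eqB.
      by apply/imsetP; exists A; rewrite // inE AP -eqB BR'.
    + have coverR : cover R = mm F @^-1: cover R'.
        apply/setP => x; rewrite inE; apply/bigcupP/bigcupP.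
          case=> A; rewrite inE => /andP[AP AR'] xA; exists (mm F @: A) => //.
          exact: imset_f.
        case=> B BR' xB; case/imsetP: (subsetP sub _ BR') => A AP eqB.
        exists A; first by rewrite inE AP -eqB BR'.
        by apply: (img_mem (sat A AP)); rewrite -eqB.
      have BN : cover R' \subset merged_nodes F.
        rewrite -covP'; apply/subsetP => x /bigcupP[B BR' xB].
        by apply/bigcupP; exists B => //; apply: (subsetP sub).
      by rewrite coverR; apply: (proj2 (robust_transfer k He BN)).
have [B BP' [uB vB]] := H P' mP'.
case/imsetP: BP' => A AP eqB; subst B.
by exists A => //; split; apply: (img_mem (sat A AP)).
Qed.

Lemma equiv_up (V : finType) (e : rel V) F k (u v : V) : ehyp e F ->
  robust_equiv e k setT u v ->
  robust_equiv (merged_edge F e) k (merged_nodes F) (mm F u) (mm F v).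
Proof.
move=> He H Q mQ.
move: (mQ) => [/and3P[/eqP cov triv nz] rob mx].
have QN : forall B, B \in Q -> B \subset merged_nodes F.
  by move=> B BQ; rewrite -cov; apply: bigcup_sup.
set P := [set mm F @^-1: B | B : {set {set V}} in Q].
have mP : max_robust_partition e k setT P.
  split.
  - apply/and3P; split.
    + apply/eqP/setP => x; rewrite inE.
      have : mm F x \in cover Q by rewrite cov mmN.
      case/bigcupP => B BQ xB; apply/bigcupP; exists (mm F @^-1: B).
        exact: imset_f.
      by rewrite inE.
    + apply/trivIsetP => A1 A2 /imsetP[B1 B1Q ->] /imsetP[B2 B2Q ->] ne.
      have neB : B1 != B2 by apply: contraNneq ne => ->.
      have d := trivIsetP triv B1 B2 B1Q B2Q neB.
      apply/disjointP => x; rewrite !inE => x1 x2.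
      by move/disjointP: d => /(_ _ x1 x2).
    + apply/imsetP => [[B BQ eq]].
      case: (set_0Vmem B) => [B0|[b bB]]; first by rewrite -B0 BQ in nz.
      have [c bc] := inN (subsetP (QN B BQ) _ bB); subst b.
      have : c \in mm F @^-1: B by rewrite inE.
      by rewrite -eq inE.
  - move=> A /imsetP[B BQ ->].
    by apply: (proj2 (robust_transfer k He (QN B BQ))); apply: rob.
  - move=> R sub c2 robR.
    set R' := [set B in Q | mm F @^-1: B \in R].
    apply: (mx R').
    + by apply/subsetP=> B; rewrite inE => /andP[].
    + apply: (leq_trans c2); have hh := leq_imset_card (fun B : {set {set V}} => mm F @^-1: B) R'; apply: (fun h => leq_trans h hh).
      apply: subset_leq_card; apply/subsetP => A AR.
      case/imsetP: (subsetP sub _ AR) => B BQ eqA.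
      by apply/imsetP; exists B; rewrite // inE BQ -eqA AR.
    + have coverR : cover R = mm F @^-1: cover R'.
        apply/setP => x; rewrite inE; apply/bigcupP/bigcupP.
          case=> A AR xA; case/imsetP: (subsetP sub _ AR) => B BQ eqA.
          exists B; first by rewrite inE BQ -eqA AR.
          by move: xA; rewrite eqA inE.
        case=> B; rewrite inE => /andP[BQ BR] xB.
        by exists (mm F @^-1: B); rewrite // inE.
      have BN : cover R' \subset merged_nodes F.
        apply/subsetP => x /bigcupP[B]; rewrite inE => /andP[BQ _] xB.
        exact: (subsetP (QN B BQ)).
      by apply: (proj1 (robust_transfer k He BN)); rewrite -coverR.
have [A AP [uA vA]] := H P mP.
case/imsetP: AP => B BQ eqA; subst A.
by exists B => //; move: uA vA; rewrite !inE.
Qed.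

Definition pb (P : Prop) : bool := if excluded_middle_informative P then true else false.

Lemma pbP (P : Prop) : reflect P (pb P).
Proof. by rewrite /pb; case: excluded_middle_informative => h; constructor. Qed.

Lemma re_refl (T : finType) (e : rel T) k (D : {set T}) x :
  x \in D -> robust_equiv e k D x x.
Proof.
move=> xD P [/and3P[/eqP cov _ _] _ _].
have : x \in cover P by rewrite cov.
by case/bigcupP => B BP xB; exists B.
Qed.

Lemma re_trans (T : finType) (e : rel T) k (D : {set T}) x y z :
  robust_equiv e k D x y -> robust_equiv e k D x z -> robust_equiv e k D y z.
Proof.
move=> Hxy Hxz P mP.
have [B1 B1P [x1 y1]] := Hxy P mP; have [B2 B2P [x2 z2]] := Hxz P mP.
case: mP => /and3P[_ triv _] _ _.
have eB : B1 = B2.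
  apply/eqP; apply/negPn/negP => ne.
  by move: (trivIsetP triv B1 B2 B1P B2P ne) => /disjointP /(_ x x1 x2).
by exists B1 => //; split => //; rewrite eB.
Qed.

Theorem theorem1 (V : finType) (e : rel V) (F : {set {set V}}) (k : nat) :
  (forall x y, e x y = (x != y) && [exists C in F, (x \in C) && (y \in C)]) ->
  forall u v : V, u != v ->
    (same_kcore_G e k u v <-> same_kcore_G' F e k u v).
Proof.
move=> He u v uv.
have He' : ehyp e F := He.
have L : same_kcore_G e k u v <-> robust_equiv e k setT u v.
  split.
    case=> X [[x0 x0D hX] _ uX vX].
    have [_ h1] := (hX u).1 uX; have [_ h2] := (hX v).1 vX.
    exact: re_trans h1 h2.
  move=> H; exists [set y | pb (robust_equiv e k setT u y)]; split.
  - exists u; first by rewrite inE.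
    move=> y; rewrite inE; split; first by move/pbP => h; split; rewrite ?inE.
    by case=> _ h; apply/pbP.
  - have sub : [set u; v] \subset [set y | pb (robust_equiv e k setT u y)].
      apply/subsetP => y; rewrite !inE => /orP[/eqP->|/eqP->]; apply/pbP => //.
      by apply: re_refl; rewrite inE.
    by have := subset_leq_card sub; rewrite cards2 uv.
  - by rewrite inE; apply/pbP; apply: re_refl; rewrite inE.
  - by rewrite inE; apply/pbP.
have L' : same_kcore_G' F e k u v <->
    robust_equiv (merged_edge F e) k (merged_nodes F) (mm F u) (mm F v).
  split.
    case=> X [[x0 x0D hX] _ uX vX].
    have [_ h1] := (hX _).1 uX; have [_ h2] := (hX _).1 vX.
    exact: re_trans h1 h2.
  move=> H.
  set X := [set y in merged_nodes F |
             pb (robust_equiv (merged_edge F e) k (merged_nodes F) (mm F u) y)].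
  have uX : mm F u \in X.
    by rewrite inE mmN /=; apply/pbP; apply: re_refl; exact: mmN.
  have vX : mm F v \in X by rewrite inE mmN /=; apply/pbP.
  exists X; split => //.
  - exists (mm F u); first exact: mmN.
    move=> y; rewrite inE; split; first by case/andP => yN /pbP h.
    by case=> yN h; rewrite yN; apply/pbP.
  - have sub : [set u; v] \subset [set w | mm F w \in X].
      by apply/subsetP => y /set2P[->|->]; rewrite inE.
    by have := subset_leq_card sub; rewrite cards2 uv.
rewrite L L'; split; [exact: equiv_up | exact: equiv_down].
Qed.
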